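(* Let $q$ be a prime power, $c\in\mathbb{F}_q^*$ and $\delta\in\mathbb{F}_{q^3}$. Then $f(x)=g(x^q-x+\delta)+cx$ is a permutation polynomial of $\mathbb{F}_{q^3}$ if one of the following holds: (i) $g(x)=u(x)^{q^2}+u(x)^q+u(x)$ for some polynomial $u(x)\in\mathbb{F}_{q^3}[x]$; (ii) $g(x)=x^{i(q^2+q+1)}$ for some positive integer $i$.
   Context: A polynomial is a permutation polynomial of a finite field if it induces a bijection of that field. $\mathbb{F}_q$ is viewed as the subfield of $\mathbb{F}_{q^3}$. *)

(* Defs.v *)
From HB Require Import structures.
From mathcomp Require Import all_boot all_order all_algebra all_field.
Set Implicit Arguments. Unset Strict Implicit. Unset Printing Implicit Defensive.
Import GRing.Theory.
Local Open Scope ring_scope.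

Definition permutation_poly (F : finFieldType) (f : {poly F}) : Prop :=
  bijective (fun x : F => f.[x]).

Definition prime_power (q : nat) : Prop :=
  exists p k : nat, [/\ prime p, (0 < k)%N & q = (p ^ k)%N].

(* Main.v *)
Require Import Defs.
From HB Require Import structures.
From mathcomp Require Import all_boot all_order all_algebra all_field zify ring.
Import GRing.Theory.
Local Open Scope ring_scope.

Lemma frobD_pow (L : finFieldType) (p k : nat) :
  p \in [pchar L] -> forall x y : L, (x + y) ^+ (p ^ k) = x ^+ (p ^ k) + y ^+ (p ^ k).
Proof.
move=> hp x y; elim: k => [|k IH]; first by rewrite !expn0 !expr1.
rewrite expnSr !exprM IH.
by rewrite -!(pFrobenius_autE hp) rmorphD.
Qed.

Theorem proposition5 (L : finFieldType) (q : nat)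
  (hq : prime_power q) (hL : #|L| = (q ^ 3)%N)
  (c delta : L) (hc0 : c != 0) (hcq : c ^+ q = c)
  (g : {poly L}) :
  ((exists u : {poly L}, g = u ^+ (q ^ 2) + u ^+ q + u) \/
   (exists i : nat, (0 < i)%N /\ g = 'X ^+ (i * (q ^ 2 + q + 1)))) ->
  permutation_poly (g \Po ('X ^+ q - 'X + delta%:P) + c *: 'X).
Proof.
move=> hg.
have [p [k [pp k0 qE]]] := hq.
have hp : p \in [pchar L].
  by apply: (card_finPcharP (n := (k * 3)%N)) => //; rewrite hL qE expnM.
have qD : forall x y : L, (x + y) ^+ q = x ^+ q + y ^+ q.
  by move=> x y; rewrite qE frobD_pow.
have q3 : forall x : L, x ^+ (q ^ 3) = x by move=> x; rewrite -hL expf_card.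
have gF : forall z : L, g.[z] ^+ q = g.[z].
  move=> z; case: hg => [[u ->]|[i [_ ->]]].
    rewrite !hornerE !qD -!exprM -!expnSr (q3 u.[z]).
    by rewrite [in RHS]addrC addrA.
  rewrite hornerE -exprM.
  have -> : (i * (q ^ 2 + q + 1) * q = i * q ^ 3 + i * (q ^ 2 + q))%N.
    by rewrite !expnS expn0 !muln1; nia.
  by rewrite exprD exprM q3 -exprD; congr (_ ^+ _); nia.
rewrite /permutation_poly; apply: injF_bij => x y /=.
rewrite !hornerE !horner_comp !hornerE => exy.
set a := x - y.
have ca : c * a = g.[y ^+ q - y + delta] - g.[x ^+ q - x + delta].
  apply/eqP; rewrite -subr_eq0; apply/eqP.
  have -> : c * a - (g.[y ^+ q - y + delta] - g.[x ^+ q - x + delta]) =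
    (g.[x ^+ q - x + delta] + c * x) - (g.[y ^+ q - y + delta] + c * y)
    by rewrite /a; ring.
  by rewrite exy subrr.
have aq : a ^+ q = a.
  have q0 : (0 < q)%N by rewrite qE expn_gt0 prime_gt0.
  have hN : forall w : L, (- w) ^+ q = - w ^+ q.
    by move=> w; apply/eqP; rewrite -addr_eq0 -qD addNr expr0n gtn_eqF.
  have : (c * a) ^+ q = c * a by rewrite ca qD hN !gF.
  by rewrite exprMn hcq => /(mulfI hc0).
have xE : x = y + a by rewrite /a addrC subrK.
have hh : x ^+ q - x + delta = y ^+ q - y + delta.
  by rewrite xE qD aq opprD addrACA subrr addr0.
move: exy; rewrite hh => /addrI /(mulfI hc0) //.
Qed.
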